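(* Let $\mathcal C=(c^{(i)}_{j,k})$ be a sequence such that there exist $a\in\mathbb R$ and $C_0>0$ with $|c^{(i)}_{j,k}|\le C_0 2^{aj}$ for all $i,j,k$. For $J\ge 0$ and $x\in\mathbb R^d$ put $P_{J,\mathcal C}(x)=\sum_{j=0}^{J}\sum_{i=1}^{N}\sum_{k\in\mathbb Z^d}c^{(i)}_{j,k}\psi^{(i)}_{j,k}(x)$. (1) Let $\gamma<0$ and $x\in\mathbb R^d$. If there is $C_1>0$ such that $|c^{(i)}_{j,k}\psi^{(i)}_{j,k}(x)|\le C_1 2^{\gamma j}$ for all $i,j,k$, then $P_{J,\mathcal C}(x)$ has a limit $f_{\mathcal C}(x)$ as $J\to+\infty$, and for every $\gamma'>\gamma$ there is $C_2>0$ such that $|f_{\mathcal C}(x)-P_{J,\mathcal C}(x)|\le C_2 2^{\gamma' J}$ for all $J\ge0$. (2) Let $\gamma>0$ and $x\in\mathbb R^d$. If the sequence $(P_{j,\mathcal C}(x))_j$ diverges at rate $\gamma$, i.e. there exist $C>0$ and $j_n\to+\infty$ with $|P_{j_n,\mathcal C}(x)|\ge C2^{\gamma j_n}$, then for every $\delta<\gamma$ the wavelet series of $\mathcal C$ diverges at rate at least $\delta$ at $x$, i.e. $\mathcal C\in D^\delta(x)$.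
   Context: Fix integers $d\ge1$, $N\ge1$ and bounded functions $\psi^{(1)},\dots,\psi^{(N)}:\mathbb R^d\to\mathbb C$ with fast decay (for every $n>0$ there is $C_n$ with $|\psi^{(i)}(x)|\le C_n(1+|x|)^{-n}$ for all $x$). The associated wavelet system is $\psi^{(i)}_{j,k}(x)=\psi^{(i)}(2^jx-k)$, $1\le i\le N$, $j\ge0$ an integer, $k\in\mathbb Z^d$ (no orthogonality, normalisation or vanishing moments are assumed). A sequence is a family $\mathcal C=(c^{(i)}_{j,k})$ of complex numbers; its wavelet series is $\sum_{j\ge0}\sum_{i=1}^N\sum_{k\in\mathbb Z^d}c^{(i)}_{j,k}\psi^{(i)}_{j,k}(x)$. For $\gamma\in\mathbb R$ and $x\in\mathbb R^d$, we write $\mathcal C\in D^\gamma(x)$ (''the wavelet series diverges at rate at least $\gamma$ at $x$'') if there exist $C>0$ and indices $(i_n,j_n,k_n)$ with $j_n\to+\infty$ and $|c^{(i_n)}_{j_n,k_n}\psi^{(i_n)}_{j_n,k_n}(x)|\ge C2^{\gamma j_n}$ for all $n$. *)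

(* Defs.v *)
From Stdlib Require Export Reals Lra Lia ZArith List ClassicalEpsilon.
Export ListNotations.
Open Scope R_scope.

Definition Cx := (R * R)%type.
Definition C0 : Cx := (0, 0).
Definition Cadd (z w : Cx) : Cx := (fst z + fst w, snd z + snd w).
Definition Csub (z w : Cx) : Cx := (fst z - fst w, snd z - snd w).
Definition Cmul (z w : Cx) : Cx :=
  (fst z * fst w - snd z * snd w, fst z * snd w + snd z * fst w).
Definition Cmod (z : Cx) : R := sqrt (fst z * fst z + snd z * snd z).

Definition Ccv (u : nat -> Cx) (l : Cx) : Prop :=
  forall eps, eps > 0 -> exists n0, forall n, (n >= n0)%nat -> Cmod (Csub (u n) l) < eps.

(* Points of R^d and Z^d are lists of length d. *)
Definition Rnorm (x : list R) : R := sqrt (fold_right (fun t s => t * t + s) 0 x).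

(* psi_{j,k}(x) = psi(2^j x - k): the argument 2^j x - k. *)
Definition dil (j : nat) (k : list Z) (x : list R) : list R :=
  map (fun p => 2 ^ j * fst p - IZR (snd p)) (combine x k).

Definition zrange (M : nat) : list Z :=
  map (fun n => (Z.of_nat n - Z.of_nat M)%Z) (seq 0 (2 * M + 1)).
Fixpoint cube (d M : nat) : list (list Z) :=
  match d with
  | O => [ [] ]
  | S d' => flat_map (fun z => map (cons z) (cube d' M)) (zrange M)
  end.

Definition Csum (l : list Cx) : Cx := fold_right Cadd C0 l.

(* Sum over k in Z^d: limit of the partial sums over the cubes [-M,M]^d
   (chosen by epsilon; meaningful when the limit exists). *)
Definition kseries (d : nat) (g : list Z -> Cx) : Cx :=
  epsilon (inhabits C0) (fun l => Ccv (fun M => Csum (map g (cube d M))) l).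

(* Coefficient sequences: c i j k, i in {0..N-1} (0-based), j in nat, k in Z^d. *)
Definition term (psi : nat -> list R -> Cx) (c : nat -> nat -> list Z -> Cx)
  (i j : nat) (k : list Z) (x : list R) : Cx :=
  Cmul (c i j k) (psi i (dil j k x)).

Definition PJ (d N : nat) (psi : nat -> list R -> Cx) (c : nat -> nat -> list Z -> Cx)
  (J : nat) (x : list R) : Cx :=
  Csum (map (fun j => Csum (map (fun i => kseries d (fun k => term psi c i j k x))
                                 (seq 0 N)))
            (seq 0 (S J))).

Definition tends_to_infty (u : nat -> nat) : Prop :=
  forall M : nat, exists n0, forall n, (n >= n0)%nat -> (u n >= M)%nat.

Definition Dgamma (d N : nat) (psi : nat -> list R -> Cx) (c : nat -> nat -> list Z -> Cx)
  (gamma : R) (x : list R) : Prop :=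
  exists C, C > 0 /\
  exists (i_ j_ : nat -> nat) (k_ : nat -> list Z),
    tends_to_infty j_ /\
    forall n, (i_ n < N)%nat /\ length (k_ n) = d /\
      Cmod (term psi c (i_ n) (j_ n) (k_ n) x) >= C * Rpower 2 (gamma * INR (j_ n)).

(* Main.v *)
Require Import Defs.
From Stdlib Require Import Reals.
From Stdlib Require Import Psatz Classical.
Open Scope R_scope.

Definition rsum (l : list R) : R := fold_right Rplus 0 l.

Lemma rsum_app l1 l2 : rsum (l1 ++ l2) = rsum l1 + rsum l2.
Proof. induction l1; simpl; [lra|]. unfold rsum in *; simpl. rewrite IHl1. lra. Qed.

Lemma rsum_map_flat {A B} (f : B -> R) (g : A -> list B) l :
  rsum (map f (flat_map g l)) = rsum (map (fun z => rsum (map f (g z))) l).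
Proof. induction l; simpl; auto. rewrite map_app, rsum_app, IHl. reflexivity. Qed.

Lemma rsum_le {A} (f g : A -> R) l : (forall a, In a l -> f a <= g a) ->
  rsum (map f l) <= rsum (map g l).
Proof. induction l; simpl; intros H; [lra|].
  unfold rsum in *; simpl. pose proof (H a (or_introl eq_refl)).
  pose proof (IHl (fun b hb => H b (or_intror hb))). lra. Qed.

Lemma rsum_nonneg {A} (f : A -> R) l : (forall a, In a l -> 0 <= f a) -> 0 <= rsum (map f l).
Proof. intros H. replace 0 with (rsum (map (fun _ => 0) l)). apply rsum_le; auto.
  clear H. induction l; simpl; auto. unfold rsum in *; simpl. rewrite IHl. lra. Qed.

Lemma rsum_plus {A} (f g : A -> R) l : rsum (map (fun a => f a + g a) l) = rsum (map f l) + rsum (map g l).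
Proof. induction l; unfold rsum in *; simpl; [lra|]. rewrite IHl; lra. Qed.

Lemma rsum_minus {A} (f g : A -> R) l : rsum (map (fun a => f a - g a) l) = rsum (map f l) - rsum (map g l).
Proof. induction l; unfold rsum in *; simpl; [lra|]. rewrite IHl; lra. Qed.

Lemma rsum_scal {A} (f : A -> R) K l : rsum (map (fun a => K * f a) l) = K * rsum (map f l).
Proof. induction l; unfold rsum in *; simpl; [lra|]. rewrite IHl; lra. Qed.

Lemma rsum_abs {A} (f g : A -> R) l : (forall a, In a l -> Rabs (f a) <= g a) ->
  Rabs (rsum (map f l)) <= rsum (map g l).
Proof. induction l; simpl; intros H; unfold rsum in *; simpl.
  rewrite Rabs_R0; lra.
  pose proof (H a (or_introl eq_refl)).
  pose proof (IHl (fun b hb => H b (or_intror hb))).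
  eapply Rle_trans; [apply Rabs_triang|]. lra. Qed.

Lemma rsum_const_bound {A} (f : A -> R) b l : (forall a, In a l -> Rabs (f a) <= b) ->
  Rabs (rsum (map f l)) <= INR (length l) * b.
Proof. intros H. eapply Rle_trans; [apply rsum_abs with (g := fun _ => b); auto|].
  clear H. induction l; unfold rsum in *; simpl map; simpl fold_right; simpl length.
  simpl; lra. rewrite S_INR. lra. Qed.

Lemma fst_Csum l : fst (Csum l) = rsum (map fst l).
Proof. induction l; simpl; auto. rewrite IHl. reflexivity. Qed.
Lemma snd_Csum l : snd (Csum l) = rsum (map snd l).
Proof. induction l; simpl; auto. rewrite IHl. reflexivity. Qed.

Lemma Cmod_ge0 z : 0 <= Cmod z.
Proof. apply sqrt_pos. Qed.

Lemma Cmod_fst z : Rabs (fst z) <= Cmod z.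
Proof. unfold Cmod. rewrite <- sqrt_Rsqr_abs. apply sqrt_le_1_alt. unfold Rsqr. nra. Qed.
Lemma Cmod_snd z : Rabs (snd z) <= Cmod z.
Proof. unfold Cmod. rewrite <- sqrt_Rsqr_abs. apply sqrt_le_1_alt. unfold Rsqr. nra. Qed.

Lemma Cmod_le_sum z : Cmod z <= Rabs (fst z) + Rabs (snd z).
Proof. unfold Cmod. rewrite <- (sqrt_Rsqr (Rabs (fst z) + Rabs (snd z))).
  2:{ pose proof (Rabs_pos (fst z)); pose proof (Rabs_pos (snd z)); lra. }
  apply sqrt_le_1_alt. unfold Rsqr.
  pose proof (Rabs_pos (fst z)); pose proof (Rabs_pos (snd z)).
  assert (fst z * fst z = Rabs (fst z) * Rabs (fst z)) by (rewrite <- Rabs_mult; rewrite Rabs_right; nra).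
  assert (snd z * snd z = Rabs (snd z) * Rabs (snd z)) by (rewrite <- Rabs_mult; rewrite Rabs_right; nra).
  nra. Qed.

Lemma Cmod_mul z w : Cmod (Cmul z w) = Cmod z * Cmod w.
Proof. unfold Cmod, Cmul; simpl. rewrite <- sqrt_mult_alt by nra. f_equal. ring. Qed.

Definition cs d (f : list Z -> R) M := rsum (map f (cube d M)).

Lemma cube_len d M k : In k (cube d M) -> length k = d.
Proof. revert k; induction d; simpl; intros k H.
  - destruct H as [<-|[]]; auto.
  - apply in_flat_map in H as [z [_ Hz]]. apply in_map_iff in Hz as [v [<- Hv]].
    simpl; f_equal; auto. Qed.

Lemma cs_S d f M : cs (S d) f M = rsum (map (fun z => cs d (fun v => f (z :: v)) M) (zrange M)).
Proof. unfold cs; simpl. rewrite rsum_map_flat. f_equal. apply map_ext. intros z.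
  rewrite map_map. reflexivity. Qed.

Lemma zrange_S M : zrange (S M) = (- Z.of_nat (S M))%Z :: zrange M ++ [Z.of_nat (S M)].
Proof. unfold zrange.
  replace (2 * S M + 1)%nat with (S (S (2 * M + 1))) by lia.
  rewrite seq_S. change (seq 0 (S (2*M+1))) with (0%nat :: seq 1 (2*M+1)).
  rewrite <- seq_shift. rewrite map_app. cbn [map app].
  rewrite map_map. f_equal. f_equal.
  apply map_ext. intros; lia. f_equal. lia. Qed.

Lemma rsum_zrange_S (G : Z -> R) M : (forall z, 0 <= G z) ->
  rsum (map G (zrange M)) <= rsum (map G (zrange (S M))).
Proof. intros H. rewrite zrange_S. cbn [map]. rewrite map_app.
  change (rsum (G (- Z.of_nat (S M))%Z :: (map G (zrange M) ++ map G [Z.of_nat (S M)])))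
   with (G (- Z.of_nat (S M))%Z + rsum (map G (zrange M) ++ map G [Z.of_nat (S M)])).
  rewrite rsum_app. pose proof (H (- Z.of_nat (S M))%Z). pose proof (H (Z.of_nat (S M))).
  unfold rsum at 3. cbn [map fold_right]. lra. Qed.

Lemma cs_nonneg d f M : (forall k, length k = d -> 0 <= f k) -> 0 <= cs d f M.
Proof. intros H. apply rsum_nonneg. intros a Ha. apply H. eapply cube_len; eauto. Qed.

Lemma cs_mono d : forall f M, (forall k, length k = d -> 0 <= f k) -> cs d f M <= cs d f (S M).
Proof. induction d; intros f M H.
  - unfold cs; simpl. lra.
  - rewrite !cs_S. apply Rle_trans with (rsum (map (fun z => cs d (fun v => f (z :: v)) (S M)) (zrange M))).
    + apply rsum_le. intros z _. apply IHd. intros k Hk. apply H. simpl; auto.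
    + apply rsum_zrange_S. intros z. apply cs_nonneg. intros k Hk; apply H; simpl; auto. Qed.

Definition phi (s : R) := s / (1 + Rabs s).

Lemma phi_bound s : Rabs (phi s) <= 1.
Proof. unfold phi, Rdiv. pose proof (Rabs_pos s). rewrite Rabs_mult, Rabs_inv.
  rewrite (Rabs_right (1 + Rabs s)) by lra. apply Rmult_le_reg_r with (1 + Rabs s). lra.
  rewrite Rmult_assoc, Rinv_l by lra. lra. Qed.

Lemma key1 s : / (1 + s * s) <= 4 * (phi (s + 1) - phi s).
Proof. unfold phi.
  assert (h1 : 0 < 1 + s*s) by nra.
  destruct (Rle_dec 0 s) as [Hs|Hs].
  - rewrite (Rabs_right s), (Rabs_right (s+1)) by lra.
    set (u := / (1 + s*s)). set (v := /(1 + (s+1))). set (w := /(1+s)).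
    assert (u * (1 + s*s) = 1) by (unfold u; field; lra).
    assert (v * (1 + (s+1)) = 1) by (unfold v; field; lra).
    assert (w * (1 + s) = 1) by (unfold w; field; lra).
    assert (0 < u) by (unfold u; apply Rinv_0_lt_compat; lra).
    assert (0 < v) by (unfold v; apply Rinv_0_lt_compat; lra).
    assert (0 < w) by (unfold w; apply Rinv_0_lt_compat; lra).
    unfold Rdiv. fold v w.
    assert (E: (s+1) * v - s * w = v * w) by nra.
    rewrite E. unfold v, w. rewrite <- Rinv_mult.
    replace (4 * / ((1 + (s + 1)) * (1 + s))) with (/ (((1 + (s + 1)) * (1 + s))/4)) by (field; lra).
    apply Rinv_le_contravar; nra.
  - destruct (Rle_dec (-1) s) as [Hs2|Hs2].
    + rewrite (Rabs_left s), (Rabs_right (s+1)) by lra.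
      set (u := / (1 + s*s)). set (v := /(1 + (s+1))). set (w := /(1+-s)).
      assert (u * (1 + s*s) = 1) by (unfold u; field; lra).
      assert (v * (1 + (s+1)) = 1) by (unfold v; field; lra).
      assert (w * (1 + -s) = 1) by (unfold w; field; lra).
      assert (0 < u) by (unfold u; apply Rinv_0_lt_compat; lra).
      assert (0 < v) by (unfold v; apply Rinv_0_lt_compat; lra).
      assert (0 < w) by (unfold w; apply Rinv_0_lt_compat; lra).
      unfold Rdiv. fold v w.
      assert (u <= 1). { apply Rmult_le_reg_r with (1+s*s); nra. }
      assert (v >= 1/2). { nra. }
      assert ( - s * w >= 0) by nra.
      nra.
    + rewrite (Rabs_left s), (Rabs_left (s+1)) by lra.
      set (u := / (1 + s*s)). set (v := /(1 + -(s+1))). set (w := /(1+-s)).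
      assert (u * (1 + s*s) = 1) by (unfold u; field; lra).
      assert (v * (1 + -(s+1)) = 1) by (unfold v; field; lra).
      assert (w * (1 + -s) = 1) by (unfold w; field; lra).
      assert (0 < u) by (unfold u; apply Rinv_0_lt_compat; lra).
      assert (0 < v) by (unfold v; apply Rinv_0_lt_compat; lra).
      assert (0 < w) by (unfold w; apply Rinv_0_lt_compat; lra).
      unfold Rdiv. fold v w.
      assert (E: (s+1) * v - s * w = v * w) by nra.
      rewrite E. unfold v, w. rewrite <- Rinv_mult.
      replace (4 * / ((1 + -(s + 1)) * (1 + -s))) with (/ (((1 + -(s + 1)) * (1 + -s))/4)) by (field; lra).
      apply Rinv_le_contravar; nra.
Qed.

Lemma abs_le_inv x b : Rabs x <= b -> -b <= x <= b.
Proof. intros H. pose proof (Rle_abs x). pose proof (Rle_abs (-x)). rewrite Rabs_Ropp in H1. lra. Qed.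

Lemma telesc (h : nat -> R) L : rsum (map (fun n => h n - h (S n)) (seq 0 L)) = h 0%nat - h L.
Proof. induction L. unfold rsum; simpl; lra.
  rewrite seq_S, map_app, rsum_app, IHL. unfold rsum; simpl. lra. Qed.

Lemma sum1D t M : rsum (map (fun z => / (1 + (t - IZR z) * (t - IZR z))) (zrange M)) <= 8.
Proof.
  eapply Rle_trans.
  - apply rsum_le with (g := fun z => 4 * (phi ((t - IZR z) + 1) - phi (t - IZR z))).
    intros; apply key1.
  - rewrite rsum_scal. unfold zrange. rewrite map_map.
    set (h := fun n : nat => phi (t + INR M + 1 - INR n)).
    replace (map _ (seq 0 (2 * M + 1))) with (map (fun n => h n - h (S n)) (seq 0 (2*M+1))).
    + rewrite telesc. pose proof (phi_bound (t + INR M + 1 - INR 0)).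
      pose proof (phi_bound (t + INR M + 1 - INR (2*M+1))).
      unfold h. apply abs_le_inv in H. apply abs_le_inv in H0. lra.
    + apply map_ext. intros n. unfold h. rewrite minus_IZR, <- !INR_IZR_INZ, S_INR.
      f_equal; f_equal; ring.
Qed.

Definition qprod (v : list R) : R := fold_right (fun t s => (1 + t * t) * s) 1 v.
Definition ss (v : list R) : R := fold_right (fun t s => t * t + s) 0 v.

Lemma qprod_ge1 v : 1 <= qprod v.
Proof. induction v; simpl; nra. Qed.
Lemma ss_ge0 v : 0 <= ss v.
Proof. induction v; simpl; nra. Qed.

Lemma qprod_ss v : qprod v <= (1 + ss v) ^ length v.
Proof. induction v; simpl. lra.
  pose proof (ss_ge0 v). pose proof (qprod_ge1 v).
  assert ((1 + ss v) ^ length v <= (1 + (a*a + ss v)) ^ length v) by (apply pow_incr; nra).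
  assert (1 <= (1 + ss v) ^ length v) by (apply pow_R1_Rle; lra).
  nra. Qed.

Lemma qprod_Rnorm v : qprod v <= (1 + Rnorm v) ^ (2 * length v).
Proof. eapply Rle_trans. apply qprod_ss. rewrite pow_mult. apply pow_incr.
  split. pose proof (ss_ge0 v); lra.
  unfold Rnorm. fold (ss v). pose proof (ss_ge0 v). pose proof (sqrt_pos (ss v)).
  pose proof (sqrt_sqrt (ss v) H). simpl. nra. Qed.

Lemma dil_len j k x : length (dil j k x) = Init.Nat.min (length x) (length k).
Proof. unfold dil. rewrite length_map, length_combine. reflexivity. Qed.

Lemma cube_prod d : forall x, length x = d -> forall j M,
  cs d (fun k => / qprod (dil j k x)) M <= 8 ^ d.
Proof. induction d; intros x Hx j M.
  - destruct x; [|discriminate]. unfold cs; simpl. unfold dil; simpl. unfold qprod; simpl. unfold rsum; simpl. lra.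
  - destruct x as [|t x']; [discriminate|]. simpl in Hx. injection Hx as Hx.
    rewrite cs_S.
    eapply Rle_trans.
    + apply rsum_le with (g := fun z => 8 ^ d * / (1 + (2^j*t - IZR z) * (2^j*t - IZR z))).
      intros z _. rewrite (Rmult_comm (8^d)).
      replace (cs d (fun v => / qprod (dil j (z :: v) (t :: x'))) M) with
        (/ (1 + (2^j*t - IZR z) * (2^j*t - IZR z)) * cs d (fun v => / qprod (dil j v x')) M).
      * apply Rmult_le_compat_l. left; apply Rinv_0_lt_compat. pose proof (Rle_0_sqr (2^j*t - IZR z)); unfold Rsqr in *; lra. apply IHd; auto.
      * unfold cs. rewrite <- rsum_scal. f_equal. apply map_ext. intros v.
        unfold dil; simpl. rewrite Rinv_mult. reflexivity.
    + rewrite (rsum_scal (fun z => / (1 + (2 ^ j * t - IZR z) * (2 ^ j * t - IZR z)))).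
      pose proof (sum1D (2^j * t) M). simpl.
      assert (0 <= 8 ^ d) by (apply pow_le; lra). rewrite Rmult_comm.
      apply Rmult_le_compat_r; auto. Qed.

Lemma tel (u F : nat -> R) J0 :
  (forall M, (M >= J0)%nat -> Rabs (u (S M) - u M) <= F (S M) - F M) ->
  forall p, Rabs (u (J0 + p)%nat - u J0) <= F (J0 + p)%nat - F J0.
Proof. intros H p. induction p.
  - rewrite Nat.add_0_r. unfold Rminus. rewrite Rplus_opp_r, Rabs_R0. lra.
  - replace (J0 + S p)%nat with (S (J0 + p)) by lia.
    pose proof (H (J0 + p)%nat ltac:(lia)).
    replace (u (S (J0 + p)) - u J0) with ((u (S (J0 + p)) - u (J0+p)%nat) + (u (J0+p)%nat - u J0)) by ring.
    eapply Rle_trans. apply Rabs_triang. lra. Qed.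

Lemma lim_bound (v : nat -> R) L M c0 b : Un_cv v L ->
  (forall n, (n >= M)%nat -> Rabs (v n - c0) <= b) -> Rabs (L - c0) <= b.
Proof. intros Hc Hb. destruct (Rle_dec (Rabs (L - c0)) b) as [h|h]; auto. exfalso.
  destruct (Hc (Rabs (L - c0) - b) ltac:(lra)) as [N HN].
  pose proof (HN (max N M) ltac:(lia)). pose proof (Hb (max N M) ltac:(lia)).
  unfold R_dist in H.
  assert (Rabs (L - c0) <= Rabs (L - v (max N M)) + Rabs (v (max N M) - c0)).
  { replace (L - c0) with ((L - v (max N M)) + (v (max N M) - c0)) by ring. apply Rabs_triang. }
  rewrite <- Rabs_Ropp in H. replace (- (v (max N M) - L)) with (L - v (max N M)) in H by ring. lra. Qed.

Lemma Gconv (u F : nat -> R) Sb :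
  (forall M, Rabs (u (S M) - u M) <= F (S M) - F M) -> (forall M, F M <= Sb) ->
  exists l, Un_cv u l /\ forall M, Rabs (l - u M) <= Sb - F M.
Proof. intros H HS.
  assert (T : forall M p, Rabs (u (M + p)%nat - u M) <= F (M + p)%nat - F M)
    by (intros M; apply tel; auto).
  assert (Hga : Un_growing (fun n => u n + F n)).
  { intros n. pose proof (H n). apply abs_le_inv in H0. lra. }
  assert (Hgb : Un_growing (fun n => F n - u n)).
  { intros n. pose proof (H n). apply abs_le_inv in H0. lra. }
  assert (Hba : has_ub (fun n => u n + F n)).
  { exists (u 0%nat - F 0%nat + 2 * Sb). intros x [n ->]. pose proof (T 0%nat n). simpl in H0.
    apply abs_le_inv in H0. pose proof (HS n). lra. }
  assert (Hbb : has_ub (fun n => F n - u n)).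
  { exists (- u 0%nat - F 0%nat + 2 * Sb). intros x [n ->]. pose proof (T 0%nat n). simpl in H0.
    apply abs_le_inv in H0. pose proof (HS n). lra. }
  destruct (growing_cv _ Hga Hba) as [la Ha].
  destruct (growing_cv _ Hgb Hbb) as [lb Hb].
  assert (Hu : Un_cv u ((la - lb)/2)).
  { intros eps Heps. destruct (Ha eps Heps) as [N1 H1]. destruct (Hb eps Heps) as [N2 H2].
    exists (max N1 N2). intros n Hn. pose proof (H1 n ltac:(lia)). pose proof (H2 n ltac:(lia)).
    unfold R_dist in *. apply Rabs_def2 in H0. apply Rabs_def2 in H3. apply Rabs_def1; lra. }
  exists ((la - lb)/2). split; auto. intros M.
  apply lim_bound with (v := u) (M := M); auto.
  intros n Hn. replace n with (M + (n - M))%nat by lia. eapply Rle_trans. apply T.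
  pose proof (HS (M + (n - M))%nat). lra. Qed.

Lemma Ccv_fst u l : Ccv u l -> Un_cv (fun n => fst (u n)) (fst l).
Proof. intros H eps He. destruct (H eps He) as [N HN]. exists N. intros n Hn.
  unfold R_dist. eapply Rle_lt_trans. 2: apply (HN n Hn).
  pose proof (Cmod_fst (Csub (u n) l)). unfold Csub in H0; simpl in H0. exact H0. Qed.
Lemma Ccv_snd u l : Ccv u l -> Un_cv (fun n => snd (u n)) (snd l).
Proof. intros H eps He. destruct (H eps He) as [N HN]. exists N. intros n Hn.
  unfold R_dist. eapply Rle_lt_trans. 2: apply (HN n Hn).
  pose proof (Cmod_snd (Csub (u n) l)). unfold Csub in H0; simpl in H0. exact H0. Qed.

Lemma Ccv_unique u l l' : Ccv u l -> Ccv u l' -> l = l'.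
Proof. intros H H'. destruct l, l'.
  pose proof (UL_sequence _ _ _ (Ccv_fst _ _ H) (Ccv_fst _ _ H')).
  pose proof (UL_sequence _ _ _ (Ccv_snd _ _ H) (Ccv_snd _ _ H')). simpl in *. subst. auto. Qed.

Lemma Ccv_mk u l1 l2 : Un_cv (fun n => fst (u n)) l1 -> Un_cv (fun n => snd (u n)) l2 -> Ccv u (l1, l2).
Proof. intros H1 H2 eps He. destruct (H1 (eps/2) ltac:(lra)) as [N1 HN1].
  destruct (H2 (eps/2) ltac:(lra)) as [N2 HN2]. exists (max N1 N2). intros n Hn.
  eapply Rle_lt_trans. apply Cmod_le_sum. unfold Csub; simpl.
  pose proof (HN1 n ltac:(lia)). pose proof (HN2 n ltac:(lia)). unfold R_dist in *. lra. Qed.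

Lemma kseries_eq d g l : Ccv (fun M => Csum (map g (cube d M))) l -> kseries d g = l.
Proof. intros H. unfold kseries.
  pose proof (epsilon_spec (inhabits C0) (fun l => Ccv (fun M => Csum (map g (cube d M))) l) (ex_intro _ l H)).
  eapply Ccv_unique; eauto. Qed.

Lemma CS d (g : list Z -> Cx) (h : list Z -> R) Sb :
  (forall k, length k = d -> Cmod (g k) <= h k) -> (forall M, cs d h M <= Sb) ->
  Cmod (kseries d g) <= 2 * Sb.
Proof. intros Hg HS.
  assert (Hcomp : forall (p : Cx -> R), (forall z, Rabs (p z) <= Cmod z) ->
    exists l, Un_cv (fun M => rsum (map (fun k => p (g k)) (cube d M))) l /\ Rabs l <= Sb).
  { intros p Hp.
    destruct (Gconv (fun M => rsum (map (fun k => p (g k)) (cube d M))) (cs d h) Sb) as [l [Hl Hb]]; auto.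
    - intros M. apply Rabs_le.
      pose proof (cs_mono d (fun k => h k - p (g k)) M).
      pose proof (cs_mono d (fun k => h k + p (g k)) M).
      unfold cs in *. rewrite !rsum_minus in H. rewrite !rsum_plus in H0.
      assert (hh : forall k, length k = d -> Rabs (p (g k)) <= h k).
      { intros k Hk. eapply Rle_trans. apply Hp. auto. }
      assert (rsum (map h (cube d M)) - rsum (map (fun k => p (g k)) (cube d M)) <=
            rsum (map h (cube d (S M))) - rsum (map (fun k => p (g k)) (cube d (S M)))).
        { apply H. intros k Hk. pose proof (hh k Hk) as Q. apply abs_le_inv in Q. lra. }
      assert (rsum (map h (cube d M)) + rsum (map (fun k => p (g k)) (cube d M)) <=
            rsum (map h (cube d (S M))) + rsum (map (fun k => p (g k)) (cube d (S M)))).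
        { apply H0. intros k Hk. pose proof (hh k Hk) as Q. apply abs_le_inv in Q. lra. }
      lra.
    - exists l. split; auto. pose proof (Hb 0%nat).
      assert (Rabs (rsum (map (fun k => p (g k)) (cube d 0))) <= cs d h 0).
      { apply rsum_abs. intros k Hk. eapply Rle_trans. apply Hp. apply Hg. eapply cube_len; eauto. }
      pose proof (Rabs_triang (l - rsum (map (fun k => p (g k)) (cube d 0))) (rsum (map (fun k => p (g k)) (cube d 0)))).
      replace (l - rsum (map (fun k => p (g k)) (cube d 0)) + rsum (map (fun k => p (g k)) (cube d 0))) with l in H1 by ring.
      lra. }
  destruct (Hcomp fst Cmod_fst) as [l1 [H1 B1]].
  destruct (Hcomp snd Cmod_snd) as [l2 [H2 B2]].
  rewrite (kseries_eq d g (l1, l2)).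
  - eapply Rle_trans. apply Cmod_le_sum. simpl. lra.
  - apply Ccv_mk.
    + eapply Un_cv_ext. 2: exact H1. intros n. simpl. rewrite fst_Csum, map_map. reflexivity.
    + eapply Un_cv_ext. 2: exact H2. intros n. simpl. rewrite snd_Csum, map_map. reflexivity.
Qed.

Lemma Rpower_pos x y : 0 < Rpower x y.
Proof. apply exp_pos. Qed.

Lemma unif_decay d N (psi : nat -> list R -> Cx) :
  (forall i, (i < N)%nat -> forall n, n > 0 -> exists Cn, forall x, length x = d ->
      Cmod (psi i x) <= Cn * Rpower (1 + Rnorm x) (- n)) ->
  forall n, n > 0 -> exists Cn, Cn > 0 /\ forall i x, (i < N)%nat -> length x = d ->
      Cmod (psi i x) <= Cn * Rpower (1 + Rnorm x) (- n).
Proof. intros H n Hn.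
  assert (forall m, (m <= N)%nat -> exists Cn, Cn > 0 /\ forall i x, (i < m)%nat -> length x = d ->
      Cmod (psi i x) <= Cn * Rpower (1 + Rnorm x) (- n)).
  { induction m; intros Hm.
    - exists 1. split. lra. intros; lia.
    - destruct (IHm ltac:(lia)) as [C1 [HC1 H1]].
      destruct (H m ltac:(lia) n Hn) as [C2 H2].
      exists (Rmax C1 (Rmax C2 1)). split. pose proof (Rmax_r C2 1). pose proof (Rmax_r C1 (Rmax C2 1)). lra.
      intros i x Hi Hx. pose proof (Rpower_pos (1 + Rnorm x) (-n)).
      pose proof (Rmax_l C1 (Rmax C2 1)). pose proof (Rmax_r C1 (Rmax C2 1)). pose proof (Rmax_l C2 1).
      destruct (Nat.eq_dec i m) as [->|Hne].
      + eapply Rle_trans. apply H2; auto. apply Rmult_le_compat_r; lra.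
      + eapply Rle_trans. apply H1; auto; lia. apply Rmult_le_compat_r; lra. }
  apply H0. lia. Qed.

Lemma min_pow t A B e : 0 <= t -> t <= A -> t <= B -> 0 < A -> 0 < B -> 0 < e < 1 ->
  t <= Rpower A (1 - e) * Rpower B e.
Proof. intros. destruct H as [Ht|Ht].
  - replace t with (Rpower t (1 - e) * Rpower t e).
    + apply Rmult_le_compat. left; apply Rpower_pos. left; apply Rpower_pos.
      apply Rle_Rpower_l; lra. apply Rle_Rpower_l; lra.
    + rewrite <- Rpower_plus. replace (1 - e + e) with 1 by ring. apply Rpower_1; auto.
  - subst. pose proof (Rpower_pos A (1-e)). pose proof (Rpower_pos B e). nra. Qed.

Lemma KS d N (psi : nat -> list R -> Cx) (c : nat -> nat -> list Z -> Cx) a C0' :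
  (1 <= d)%nat ->
  (forall i, (i < N)%nat -> forall n, n > 0 -> exists Cn, forall x, length x = d ->
      Cmod (psi i x) <= Cn * Rpower (1 + Rnorm x) (- n)) ->
  C0' > 0 ->
  (forall i j k, (i < N)%nat -> length k = d -> Cmod (c i j k) <= C0' * Rpower 2 (a * INR j)) ->
  forall e, 0 < e < 1 -> exists K, K > 0 /\ forall i j x A, (i < N)%nat -> length x = d -> A > 0 ->
    (forall k, length k = d -> Cmod (term psi c i j k x) <= A) ->
    Cmod (kseries d (fun k => term psi c i j k x)) <= K * Rpower A (1 - e) * Rpower 2 (a * e * INR j).
Proof. intros Hd Hdec HC0 Hc e He.
  assert (Hn : 2 * INR d / e > 0).
  { apply Rdiv_lt_0_compat; [|lra]. apply le_INR in Hd. simpl in Hd. lra. }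
  destruct (unif_decay d N psi Hdec _ Hn) as [Cn [HCn HD]].
  exists (2 * 8 ^ d * Rpower (C0' * Cn) e). split.
  { pose proof (Rpower_pos (C0' * Cn) e). pose proof (pow_lt 8 d ltac:(lra)). nra. }
  intros i j x A Hi Hx HA HT.
  set (L := Rpower A (1 - e) * Rpower (C0' * Cn) e * Rpower 2 (a * e * INR j)).
  assert (HL : 0 < L) by (unfold L; pose proof (Rpower_pos A (1-e)); pose proof (Rpower_pos (C0' * Cn) e);
     pose proof (Rpower_pos 2 (a * e * INR j)); apply Rmult_lt_0_compat; [apply Rmult_lt_0_compat|]; auto).
  replace (2 * 8 ^ d * Rpower (C0' * Cn) e * Rpower A (1 - e) * Rpower 2 (a * e * INR j)) with (2 * (L * 8 ^ d))
    by (unfold L; ring).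
  apply CS with (h := fun k => L * / qprod (dil j k x)).
  - intros k Hk.
    assert (Hlen : length (dil j k x) = d) by (rewrite dil_len; lia).
    set (r := Rnorm (dil j k x)).
    assert (Hr : 0 <= r) by apply sqrt_pos.
    set (B := C0' * Rpower 2 (a * INR j) * (Cn * Rpower (1 + r) (- (2 * INR d / e)))).
    assert (HB : 0 < B).
    { unfold B. pose proof (Rpower_pos 2 (a * INR j)). pose proof (Rpower_pos (1 + r) (- (2 * INR d / e))).
      repeat apply Rmult_lt_0_compat; lra. }
    eapply Rle_trans. apply (min_pow _ A B e); auto. apply Cmod_ge0.
    + unfold term. rewrite Cmod_mul. unfold B. apply Rmult_le_compat. apply Cmod_ge0. apply Cmod_ge0.
      apply Hc; auto. apply HD; auto.
    + unfold B. rewrite <- !Rpower_mult_distr; try apply Rpower_pos; try lra.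
      2:{ apply Rmult_lt_0_compat; auto. apply Rpower_pos. }
      rewrite !Rpower_mult.
      replace (- (2 * INR d / e) * e) with (- INR (2 * d)) by (rewrite mult_INR; simpl; field; lra).
      rewrite Rpower_Ropp, Rpower_pow by lra.
      unfold L. 
      replace (a * INR j * e) with (a * e * INR j) by ring.
      rewrite <- Rpower_mult_distr by lra.
      replace (Rpower A (1 - e) * (Rpower C0' e * Rpower 2 (a * e * INR j) * (Rpower Cn e * / (1 + r) ^ (2 * d))))
        with (Rpower A (1 - e) * Rpower C0' e * Rpower Cn e * Rpower 2 (a * e * INR j) * / (1 + r) ^ (2 * d)) by ring.
      replace (Rpower A (1 - e) * (Rpower C0' e * Rpower Cn e) * Rpower 2 (a * e * INR j) * / qprod (dil j k x))
        with (Rpower A (1 - e) * Rpower C0' e * Rpower Cn e * Rpower 2 (a * e * INR j) * / qprod (dil j k x)) by ring.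
      apply Rmult_le_compat_l.
      * pose proof (Rpower_pos A (1-e)). pose proof (Rpower_pos C0' e). pose proof (Rpower_pos Cn e).
        pose proof (Rpower_pos 2 (a * e * INR j)). left. repeat apply Rmult_lt_0_compat; auto.
      * apply Rinv_le_contravar. pose proof (qprod_ge1 (dil j k x)); lra.
        pose proof (qprod_Rnorm (dil j k x)). rewrite Hlen in H. exact H.
      * apply Rmult_lt_0_compat; auto. apply Rpower_pos.
  - intros M. unfold cs. rewrite rsum_scal. apply Rmult_le_compat_l. lra.
    apply cube_prod; auto.
Qed.

Lemma Rpow2 g j : Rpower 2 (g * INR j) = (Rpower 2 g) ^ j.
Proof. rewrite <- Rpower_mult. apply Rpower_pow. apply Rpower_pos. Qed.

Section Comp.
Variable p : Cx -> R.
Hypothesis Hp1 : forall l, p (Csum l) = rsum (map p l).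

Lemma p_step (f : nat -> Cx) J :
  p (Csum (map f (seq 0 (S (S J))))) = p (Csum (map f (seq 0 (S J)))) + p (f (S J)).
Proof. rewrite !Hp1. rewrite (seq_S (S J)), !map_app, rsum_app. cbn [map]. unfold rsum. cbn [fold_right]. simpl (0 + S J)%nat. ring. Qed.

Lemma comp_lim (f : nat -> Cx) b q : 0 < q < 1 -> 0 <= b ->
  (forall j, Rabs (p (f j)) <= b * q ^ j) ->
  exists l, Un_cv (fun J => p (Csum (map f (seq 0 (S J))))) l /\
    forall J, Rabs (l - p (Csum (map f (seq 0 (S J))))) <= b / (1 - q) * q ^ J.
Proof. intros Hq Hb Hf.
  destruct (Gconv (fun J => p (Csum (map f (seq 0 (S J))))) (fun J => b * (1 - q ^ S J) / (1 - q)) (b / (1 - q)))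
    as [l [Hl HB]].
  - intros M. rewrite p_step. replace (p (Csum (map f (seq 0 (S M)))) + p (f (S M)) - p (Csum (map f (seq 0 (S M)))))
      with (p (f (S M))) by ring. eapply Rle_trans. apply Hf. right. simpl. field. lra.
  - intros M. pose proof (pow_lt q (S M) ltac:(lra)). unfold Rdiv.
    apply Rmult_le_compat_r. left; apply Rinv_0_lt_compat; lra. nra.
  - exists l. split; auto. intros J. eapply Rle_trans. apply HB. simpl.
    replace (b / (1 - q) - b * (1 - q * q ^ J) / (1 - q)) with (b / (1 - q) * q ^ J * q) by (field; lra).
    assert (0 <= b / (1 - q) * q ^ J).
    { apply Rmult_le_pos. unfold Rdiv. apply Rmult_le_pos; auto. left; apply Rinv_0_lt_compat; lra.
      apply pow_le; lra. }
    nra.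
Qed.

Lemma comp_grow (f : nat -> Cx) b r J0 : 1 < r -> 0 <= b ->
  (forall j, (j >= J0)%nat -> Rabs (p (f j)) <= b * r ^ j) ->
  forall J, (J >= J0)%nat -> Rabs (p (Csum (map f (seq 0 (S J))))) <=
     Rabs (p (Csum (map f (seq 0 (S J0))))) + b * r / (r - 1) * r ^ J.
Proof. intros Hr Hb Hf J HJ.
  pose proof (tel (fun J => p (Csum (map f (seq 0 (S J))))) (fun J => b * r ^ S J / (r - 1)) J0) as T.
  assert (T' : forall p0, Rabs (p (Csum (map f (seq 0 (S (J0 + p0))))) - p (Csum (map f (seq 0 (S J0)))))
      <= b * r ^ S (J0 + p0) / (r - 1) - b * r ^ S J0 / (r - 1)).
  { apply T. intros M HM. rewrite p_step.
    replace (p (Csum (map f (seq 0 (S M)))) + p (f (S M)) - p (Csum (map f (seq 0 (S M)))))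
      with (p (f (S M))) by ring. eapply Rle_trans. apply Hf. lia. right. simpl. field. lra. }
  replace J with (J0 + (J - J0))%nat by lia. pose proof (T' (J - J0)%nat).
  pose proof (pow_lt r (S J0) ltac:(lra)).
  assert (0 <= b * r ^ S J0 / (r - 1)). { unfold Rdiv. apply Rmult_le_pos. nra. left; apply Rinv_0_lt_compat; lra. }
  replace (b * r / (r - 1) * r ^ (J0 + (J - J0))) with (b * r ^ S (J0 + (J - J0)) / (r - 1)) by (simpl; field; lra).
  pose proof (Rabs_triang_inv (p (Csum (map f (seq 0 (S (J0 + (J - J0)))))))  (p (Csum (map f (seq 0 (S J0)))))).
  lra. Qed.

End Comp.

Lemma fst_hom l : fst (Csum l) = rsum (map fst l). Proof. apply fst_Csum. Qed.
Lemma snd_hom l : snd (Csum l) = rsum (map snd l). Proof. apply snd_Csum. Qed.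

Lemma U_bound (p : Cx -> R) (Hp1 : forall l, p (Csum l) = rsum (map p l)) (Hp2 : forall z, Rabs (p z) <= Cmod z)
  N (g : nat -> Cx) b : (forall i, (i < N)%nat -> Cmod (g i) <= b) ->
  Rabs (p (Csum (map g (seq 0 N)))) <= INR N * b.
Proof. intros H. rewrite Hp1, map_map. replace N with (length (seq 0 N)) at 2 by apply length_seq.
  apply rsum_const_bound. intros i Hi. apply in_seq in Hi. eapply Rle_trans. apply Hp2. apply H. lia. Qed.

Definition Uj d N (psi : nat -> list R -> Cx) c x j :=
  Csum (map (fun i => kseries d (fun k => term psi c i j k x)) (seq 0 N)).

Lemma PJ_eq d N psi c J x : PJ d N psi c J x = Csum (map (Uj d N psi c x) (seq 0 (S J))).
Proof. reflexivity. Qed.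

Lemma choose_e g0 g a : g0 < g -> exists e, 0 < e < 1 /\ e * (a - g0) <= g - g0.
Proof. intros H. exists (Rmin (1/2) ((g - g0) / (Rabs (a - g0) + 1))).
  pose proof (Rabs_pos (a - g0)). 
  assert (0 < (g - g0) / (Rabs (a - g0) + 1)) by (apply Rdiv_lt_0_compat; lra).
  pose proof (Rmin_l (1/2) ((g - g0) / (Rabs (a - g0) + 1))).
  pose proof (Rmin_r (1/2) ((g - g0) / (Rabs (a - g0) + 1))).
  split. split. apply Rmin_glb_lt; lra. lra.
  set (e := Rmin (1/2) ((g - g0) / (Rabs (a - g0) + 1))) in *.
  assert (e > 0) by (unfold e; apply Rmin_glb_lt; lra).
  pose proof (Rle_abs (a - g0)).
  assert (e * (Rabs (a - g0) + 1) <= g - g0).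
  { apply Rle_trans with ((g - g0) / (Rabs (a - g0) + 1) * (Rabs (a - g0) + 1)).
    apply Rmult_le_compat_r; lra. right; field; lra. }
  nra. Qed.

Lemma pow_combine A g0 e a j : A > 0 ->
  Rpower (A * Rpower 2 (g0 * INR j)) (1 - e) * Rpower 2 (a * e * INR j)
  = Rpower A (1 - e) * Rpower 2 ((g0 + e * (a - g0)) * INR j).
Proof. intros HA. rewrite <- Rpower_mult_distr by (auto; apply Rpower_pos).
  rewrite Rpower_mult. rewrite Rmult_assoc, <- Rpower_plus. f_equal. f_equal. ring. Qed.

Lemma P1core d N (psi : nat -> list R -> Cx) (c : nat -> nat -> list Z -> Cx) a C0' :
  (1 <= d)%nat ->
  (forall i, (i < N)%nat -> forall n, n > 0 -> exists Cn, forall x, length x = d ->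
      Cmod (psi i x) <= Cn * Rpower (1 + Rnorm x) (- n)) ->
  C0' > 0 ->
  (forall i j k, (i < N)%nat -> length k = d -> Cmod (c i j k) <= C0' * Rpower 2 (a * INR j)) ->
  forall gamma x C1, gamma < 0 -> length x = d -> C1 > 0 ->
  (forall i j k, (i < N)%nat -> length k = d ->
        Cmod (term psi c i j k x) <= C1 * Rpower 2 (gamma * INR j)) ->
  forall g, gamma < g < 0 -> exists l D, D > 0 /\ Ccv (fun J => PJ d N psi c J x) l /\
    forall J, Cmod (Csub l (PJ d N psi c J x)) <= D * Rpower 2 (g * INR J).
Proof. intros Hd Hdec HC0 Hc gamma x C1 Hg Hx HC1 HT g [Hg1 Hg2].
  destruct (choose_e gamma g a Hg1) as [e [He He2]].
  destruct (KS d N psi c a C0' Hd Hdec HC0 Hc e He) as [K [HK HKS]].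
  set (q := Rpower 2 g).
  assert (Hq : 0 < q < 1).
  { split. apply Rpower_pos. unfold q. rewrite <- (Rpower_O 2) by lra. apply Rpower_lt; lra. }
  set (K' := K * Rpower C1 (1 - e)).
  assert (HK' : 0 < K') by (unfold K'; pose proof (Rpower_pos C1 (1-e)); nra).
  assert (Hks : forall i j, (i < N)%nat -> Cmod (kseries d (fun k => term psi c i j k x)) <= K' * q ^ j).
  { intros i j Hi. eapply Rle_trans. apply (HKS i j x (C1 * Rpower 2 (gamma * INR j))); auto.
    pose proof (Rpower_pos 2 (gamma * INR j)); nra.
    rewrite Rmult_assoc, pow_combine by lra. unfold K'. rewrite Rmult_assoc.
    apply Rmult_le_compat_l. lra. apply Rmult_le_compat_l. left; apply Rpower_pos.
    unfold q. rewrite <- Rpow2. apply Rle_Rpower. lra. apply Rmult_le_compat_r. apply pos_INR. lra. }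
  assert (HU : forall (p : Cx -> R), (forall l, p (Csum l) = rsum (map p l)) -> (forall z, Rabs (p z) <= Cmod z) ->
     forall j, Rabs (p (Uj d N psi c x j)) <= INR N * K' * q ^ j).
  { intros p Hp1 Hp2 j. unfold Uj. rewrite Rmult_assoc. apply U_bound; auto. }
  destruct (comp_lim fst fst_hom (Uj d N psi c x) (INR N * K') q Hq) as [l1 [H1 B1]].
  { pose proof (pos_INR N); nra. } { apply HU. apply fst_hom. apply Cmod_fst. }
  destruct (comp_lim snd snd_hom (Uj d N psi c x) (INR N * K') q Hq) as [l2 [H2 B2]].
  { pose proof (pos_INR N); nra. } { apply HU. apply snd_hom. apply Cmod_snd. }
  exists (l1, l2), (2 * (INR N * K' / (1 - q)) + 1). split.
  { assert (0 <= INR N * K' / (1 - q)). { unfold Rdiv. apply Rmult_le_pos. pose proof (pos_INR N); nra.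
      left; apply Rinv_0_lt_compat; lra. } lra. }
  split.
  - apply Ccv_mk; auto.
  - intros J. rewrite PJ_eq. eapply Rle_trans. apply Cmod_le_sum. unfold Csub; cbn [fst snd].
    pose proof (B1 J). pose proof (B2 J).
    rewrite Rpow2. fold q. pose proof (pow_lt q J ltac:(lra)). lra.
Qed.

Lemma Rpower_1_base y : Rpower 1 y = 1.
Proof. unfold Rpower. rewrite ln_1, Rmult_0_r. apply exp_0. Qed.

Lemma P2 d N (psi : nat -> list R -> Cx) (c : nat -> nat -> list Z -> Cx) a C0' :
  (1 <= d)%nat ->
  (forall i, (i < N)%nat -> forall n, n > 0 -> exists Cn, forall x, length x = d ->
      Cmod (psi i x) <= Cn * Rpower (1 + Rnorm x) (- n)) ->
  C0' > 0 ->
  (forall i j k, (i < N)%nat -> length k = d -> Cmod (c i j k) <= C0' * Rpower 2 (a * INR j)) ->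
  forall (gamma : R) (x : list R), gamma > 0 -> length x = d ->
     (exists C, C > 0 /\ exists jn : nat -> nat, tends_to_infty jn /\
        forall n, Cmod (PJ d N psi c (jn n) x) >= C * Rpower 2 (gamma * INR (jn n))) ->
     forall delta, delta < gamma -> Dgamma d N psi c delta x.
Proof. intros Hd Hdec HC0 Hc gamma x Hg Hx [C [HC [jn [Ht Hjn]]]] delta Hdel.
  destruct (classic (forall J0, exists j i k, (j >= J0)%nat /\ (i < N)%nat /\ length k = d /\
      Cmod (term psi c i j k x) >= Rpower 2 (delta * INR j))) as [Hall|Hnot].
  - assert (Hp : forall J0, exists t : nat * nat * list Z, (fst (fst t) >= J0)%nat /\ (snd (fst t) < N)%nat /\
       length (snd t) = d /\ Cmod (term psi c (snd (fst t)) (fst (fst t)) (snd t) x) >= Rpower 2 (delta * INR (fst (fst t)))).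
    { intros J0. destruct (Hall J0) as [j [i [k Hk]]]. exists (j, i, k). exact Hk. }
    set (f := fun J0 => proj1_sig (constructive_indefinite_description _ (Hp J0))).
    assert (Hf : forall J0, _) by (intros J0; exact (proj2_sig (constructive_indefinite_description _ (Hp J0)))).
    exists 1. split. lra.
    exists (fun n => snd (fst (f n))), (fun n => fst (fst (f n))), (fun n => snd (f n)). split.
    + intros M. exists M. intros n Hn. destruct (Hf n) as [H1 _]. unfold f. lia.
    + intros n. destruct (Hf n) as [H1 [H2 [H3 H4]]]. unfold f. repeat split; auto. lra.
  - exfalso. apply not_all_ex_not in Hnot. destruct Hnot as [J0 HJ0].
    assert (Hsmall : forall j i k, (j >= J0)%nat -> (i < N)%nat -> length k = d ->
       Cmod (term psi c i j k x) <= Rpower 2 (delta * INR j)).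
    { intros j i k H1 H2 H3. destruct (Rle_dec (Cmod (term psi c i j k x)) (Rpower 2 (delta * INR j))) as [h|h]; auto.
      exfalso. apply HJ0. exists j, i, k. repeat split; auto. lra. }
    set (e := (Rmax delta 0 + gamma) / 2).
    pose proof (Rmax_l delta 0). pose proof (Rmax_r delta 0).
    assert (Hm : Rmax delta 0 < gamma) by (apply Rmax_lub_lt; lra).
    assert (He1 : 0 < e) by (unfold e; lra). assert (He2 : e < gamma) by (unfold e; lra).
    assert (He3 : delta < e) by (unfold e; lra).
    destruct (choose_e delta e a He3) as [ep [Hep Hep2]].
    destruct (KS d N psi c a C0' Hd Hdec HC0 Hc ep Hep) as [K [HK HKS]].
    set (r := Rpower 2 e).
    assert (Hr : 1 < r). { unfold r. rewrite <- (Rpower_O 2) by lra. apply Rpower_lt; lra. }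
    assert (Hks : forall i j, (j >= J0)%nat -> (i < N)%nat -> Cmod (kseries d (fun k => term psi c i j k x)) <= K * r ^ j).
    { intros i j Hj Hi. eapply Rle_trans. apply (HKS i j x (Rpower 2 (delta * INR j))); auto.
      apply Rpower_pos.
      rewrite <- (Rmult_1_l (Rpower 2 (delta * INR j))). rewrite Rmult_assoc, pow_combine by lra.
      rewrite Rpower_1_base, Rmult_1_l.
      apply Rmult_le_compat_l. lra.
      unfold r. rewrite <- Rpow2. apply Rle_Rpower. lra. apply Rmult_le_compat_r. apply pos_INR. lra. }
    assert (HU : forall (p : Cx -> R), (forall l, p (Csum l) = rsum (map p l)) -> (forall z, Rabs (p z) <= Cmod z) ->
       forall j, (j >= J0)%nat -> Rabs (p (Uj d N psi c x j)) <= INR N * K * r ^ j).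
    { intros p Hp1 Hp2 j Hj. unfold Uj. rewrite Rmult_assoc. apply U_bound; auto. }
    assert (HNK : 0 <= INR N * K) by (pose proof (pos_INR N); nra).
    pose proof (comp_grow fst fst_hom (Uj d N psi c x) (INR N * K) r J0 Hr HNK
       (HU fst fst_hom Cmod_fst)) as G1.
    pose proof (comp_grow snd snd_hom (Uj d N psi c x) (INR N * K) r J0 Hr HNK
       (HU snd snd_hom Cmod_snd)) as G2.
    set (V := Rabs (fst (Csum (map (Uj d N psi c x) (seq 0 (S J0))))) + Rabs (snd (Csum (map (Uj d N psi c x) (seq 0 (S J0)))))).
    set (E := 2 * (INR N * K * r / (r - 1))).
    assert (HV : 0 <= V) by (unfold V; pose proof (Rabs_pos (fst (Csum (map (Uj d N psi c x) (seq 0 (S J0)))))); pose proof (Rabs_pos (snd (Csum (map (Uj d N psi c x) (seq 0 (S J0)))))); lra).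
    assert (HE : 0 <= E). { unfold E. unfold Rdiv. apply Rmult_le_pos. lra. apply Rmult_le_pos. nra. left; apply Rinv_0_lt_compat; lra. }
    assert (Hbig : forall J, (J >= J0)%nat -> Cmod (PJ d N psi c J x) <= V + E * r ^ J).
    { intros J HJ. rewrite PJ_eq. eapply Rle_trans. apply Cmod_le_sum.
      pose proof (G1 J HJ). pose proof (G2 J HJ). unfold V, E. lra. }
    assert (Hln : 0 < ln 2) by (pose proof ln_lt_2; lra).
    assert (Hk : 0 < C * (gamma - e) * ln 2) by (apply Rmult_lt_0_compat; [apply Rmult_lt_0_compat|]; lra).
    destruct (INR_unbounded ((V + E) / (C * (gamma - e) * ln 2))) as [m Hmm].
    destruct (Ht (max m J0)) as [n0 Hn0]. pose proof (Hn0 n0 (le_n _)) as Hjm.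
    set (J := jn n0) in *.
    pose proof (Hjn n0) as HJ. fold J in HJ. pose proof (Hbig J ltac:(lia)).
    assert (HmJ : INR m <= INR J) by (apply le_INR; lia).
    replace (gamma * INR J) with (e * INR J + (gamma - e) * INR J) in HJ by ring.
    rewrite Rpower_plus in HJ. unfold r in H1. rewrite <- Rpow2 in H1.
    set (P := Rpower 2 (e * INR J)) in *.
    assert (HP : 1 <= P). { unfold P. rewrite <- (Rpower_O 2) by lra. apply Rle_Rpower. lra. apply Rmult_le_pos; [lra|apply pos_INR]. }
    assert (HT : 1 + (gamma - e) * INR J * ln 2 <= Rpower 2 ((gamma - e) * INR J)) by (unfold Rpower; apply exp_ineq1_le).
    set (T := Rpower 2 ((gamma - e) * INR J)) in *.
    assert (C * T <= V + E).
    { assert (C * P * T <= (V + E) * P) by nra. nra. }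
    assert ((V + E) / (C * (gamma - e) * ln 2) * (C * (gamma - e) * ln 2) = V + E) by (field; lra).
    assert (C * ((gamma - e) * INR J * ln 2) >= C * (gamma - e) * ln 2 * INR m).
    { assert (0 <= C * (gamma - e) * ln 2 * (INR J - INR m)) by (apply Rmult_le_pos; lra). nra. }
    nra.
Qed.

Theorem mainTheorem1 :
  forall (d N : nat) (psi : nat -> list R -> Cx),
  (1 <= d)%nat -> (1 <= N)%nat ->
  (* each psi^(i) is bounded on R^d *)
  (forall i, (i < N)%nat -> exists B, forall x, length x = d -> Cmod (psi i x) <= B) ->
  (* fast decay *)
  (forall i, (i < N)%nat -> forall n, n > 0 -> exists Cn, forall x, length x = d ->
      Cmod (psi i x) <= Cn * Rpower (1 + Rnorm x) (- n)) ->
  forall (c : nat -> nat -> list Z -> Cx) (a C0' : R),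
  C0' > 0 ->
  (forall i j k, (i < N)%nat -> length k = d -> Cmod (c i j k) <= C0' * Rpower 2 (a * INR j)) ->
  (* (1) *)
  (forall (gamma : R) (x : list R), gamma < 0 -> length x = d ->
     (exists C1, C1 > 0 /\ forall i j k, (i < N)%nat -> length k = d ->
        Cmod (term psi c i j k x) <= C1 * Rpower 2 (gamma * INR j)) ->
     exists f : Cx,
       Ccv (fun J => PJ d N psi c J x) f /\
       forall gamma', gamma' > gamma -> exists C2, C2 > 0 /\
         forall J : nat, Cmod (Csub f (PJ d N psi c J x)) <= C2 * Rpower 2 (gamma' * INR J))
  /\
  (* (2) *)
  (forall (gamma : R) (x : list R), gamma > 0 -> length x = d ->
     (exists C, C > 0 /\ exists jn : nat -> nat, tends_to_infty jn /\
        forall n, Cmod (PJ d N psi c (jn n) x) >= C * Rpower 2 (gamma * INR (jn n))) ->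
     forall delta, delta < gamma -> Dgamma d N psi c delta x).
Proof.
  intros d N psi Hd HN Hbd Hdec c a C0' HC0 Hc. split.
  - intros gamma x Hg Hx [C1 [HC1 HT]].
    destruct (P1core d N psi c a C0' Hd Hdec HC0 Hc gamma x C1 Hg Hx HC1 HT (gamma / 2) ltac:(lra))
      as [l0 [D0 [HD0 [Hcv0 _]]]].
    exists l0. split; auto. intros g' Hg'.
    set (g := Rmin g' (gamma / 2)).
    assert (Hgg : gamma < g < 0).
    { unfold g. split. apply Rmin_glb_lt; lra. pose proof (Rmin_r g' (gamma/2)). lra. }
    destruct (P1core d N psi c a C0' Hd Hdec HC0 Hc gamma x C1 Hg Hx HC1 HT g Hgg)
      as [l [D [HD [Hcv Hb]]]].
    rewrite <- (Ccv_unique _ _ _ Hcv Hcv0).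
    exists D. split; auto. intros J. eapply Rle_trans. apply Hb.
    apply Rmult_le_compat_l. lra. apply Rle_Rpower. lra. apply Rmult_le_compat_r. apply pos_INR.
    apply Rmin_l.
  - eapply P2; eauto.
Qed.
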